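(* Let $L\subset\mathbb{C}$ be a single slit domain, i.e. the complex plane minus a single slit lying on the negative real axis. Let $f=h+\overline{g}\in\mathcal{S}_H^0$ map $\mathbb{D}$ onto $L$, satisfy $h(z)-g(z)=\frac{z}{(1-z)^2}$ for $z\in\mathbb{D}$, and have dilatation $\omega=g'/h'=b^2$ with $b(z)=\varepsilon z$, $\varepsilon\in\{1,-1\}$. Let $S$ be the minimal surface over $L$ with projection $f$, i.e. $S=\{(u(z),v(z),F(z)):z\in\mathbb{D}\}$ with $u=\mathrm{Re}\,f$, $v=\mathrm{Im}\,f$, $F(z)=\mathrm{Re}\int_0^z2ib(t)h'(t)\,dt+c$, $c\in\mathbb{R}$. Then $$u=\mathrm{Re}\left(\frac{2z^3-3z^2+3z}{3(1-z)^3}\right),\qquad v=\mathrm{Im}\left(\frac{z}{(1-z)^2}\right),\qquad F=\pm\mathrm{Im}\left(\frac{1}{(z-1)^2}+\frac{2}{3(z-1)^3}\right)+c,$$ where the sign $\pm$ corresponds to $\varepsilon$ and $c$ is a real constant.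
   Context: $\mathbb{D}$ is the unit disk. A harmonic mapping $f=h+\overline g$ ($h,g$ analytic on $\mathbb{D}$) is sense-preserving if $h'\ne0$ and its dilatation $\omega=g'/h'$ satisfies $|\omega|<1$. $\mathcal{S}_H^0$ is the class of sense-preserving univalent harmonic mappings $f=h+\overline g$ on $\mathbb{D}$ with $h(0)=g(0)=0$, $h'(0)=1$, $g'(0)=0$. Minimal surface with projection $f$ (Weierstrass–Enneper): $S=\{(\mathrm{Re}\int_0^z\phi_1+c_1,\mathrm{Re}\int_0^z\phi_2+c_2,\mathrm{Re}\int_0^z\phi_3+c_3)\}$ with $\phi_j$ analytic, $\phi_1^2+\phi_2^2+\phi_3^2=0$, $f=\mathrm{Re}\int_0^z\phi_1+i\,\mathrm{Re}\int_0^z\phi_2$ univalent sense-preserving harmonic onto the domain; for $\omega=b^2$, $b(z)=\pm z$, one has $\phi_1=h'+g'$, $\phi_2=-i(h'-g')$, $\phi_3=2ibh'$. *)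

(* Defs.v *)
From Stdlib Require Import Reals.
From Coquelicot Require Import Coquelicot.
Open Scope R_scope.

Definition unit_disk (z : C) : Prop := Cmod z < 1.

Definition has_cderiv (f : C -> C) (z l : C) : Prop :=
  @is_derive C_AbsRing C_NormedModule f z l.

(* Path integral of phi along the segment [0, z]:
   int_0^z phi(t) dt = int_0^1 phi(s z) z ds. *)
Definition seg_int0 (phi : C -> C) (z : C) : C :=
  @RInt C_R_CompleteNormedModule (fun s : R => Cmult (phi (RtoC s * z)%C) z) 0 1.

Definition single_slit_domain (L : C -> Prop) : Prop :=
  exists a : R, a < 0 /\
    forall w : C, L w <-> ~ (Im w = 0 /\ Re w <= a).

Definition in_SH0 (h g dh dg : C -> C) : Prop :=
  (forall z, unit_disk z -> has_cderiv h z (dh z) /\ has_cderiv g z (dg z)) /\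
  h 0%R = 0%R /\ g 0%R = 0%R /\ dh 0%R = 1%R /\ dg 0%R = 0%R /\
  (forall z, unit_disk z -> dh z <> 0%R /\ Cmod (dg z / dh z)%C < 1) /\
  (forall z1 z2, unit_disk z1 -> unit_disk z2 ->
     (h z1 + Cconj (g z1))%C = (h z2 + Cconj (g z2))%C -> z1 = z2).

(* Main.v *)
Require Import Defs.
From Stdlib Require Import Reals Lra.
From Coquelicot Require Import Coquelicot.
Open Scope R_scope.

Lemma derive_eps {K : AbsRing} {V : NormedModule K} (f : K -> V) x l :
 (forall eps : posreal, exists delta : posreal, forall y : K,
    norm (minus y x) < delta ->
    norm (minus (minus (f y) (f x)) (scal (minus y x) l)) <= eps * norm (minus y x)) ->
 is_derive f x l.
Proof.
intros H. split. apply is_linear_scal_l.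
intros x' Hx'. apply (@is_filter_lim_locally_unique K (AbsRing_NormedModule K)) in Hx'. subst x'.
intros eps. destruct (H eps) as [d Hd].
exists d. intros y Hy. apply Hd. exact Hy.
Qed.

Lemma derive_eps_inv {K : AbsRing} {V : NormedModule K} (f : K -> V) x l :
 is_derive f x l ->
 (forall eps : posreal, exists delta : posreal, forall y : K,
    norm (minus y x) < delta ->
    norm (minus (minus (f y) (f x)) (scal (minus y x) l)) <= eps * norm (minus y x)).
Proof.
intros [_ H] eps. specialize (H x (fun P HP => HP) eps).
destruct H as [d Hd].
exists d. intros y Hy. apply Hd. exact Hy.
Qed.
Notation CD f x l := (@is_derive C_AbsRing (AbsRing_NormedModule C_AbsRing) f x l).

Lemma Cmod_sub_ge (a b : C) : Cmod a - Cmod b <= Cmod (a - b).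
Proof.
assert (H := Cmod_triangle (a - b) b).
replace (a - b + b)%C with a in H by ring. lra.
Qed.

Lemma is_derive_Cinv (w : C) : w <> 0%C -> CD Cinv w (- / (w*w))%C.
Proof.
intros Hw. apply derive_eps. intros eps.
assert (Hr : 0 < Cmod w) by (apply Cmod_gt_0; exact Hw).
set (r := Cmod w) in *.
assert (Hd : 0 < Rmin (r/2) (eps*r*r*r/2)).
{ apply Rmin_pos. lra. assert (0 < eps) by apply cond_pos.
  assert (0 < eps * r) by nra. assert (0 < eps*r*r) by nra. nra. }
exists (mkposreal _ Hd). intros y Hy. simpl in Hy.
change (Cmod (Cinv y - Cinv w - (y - w) * (- / (w*w))) <= eps * Cmod (y - w)).
change (Cmod (y - w) < Rmin (r/2) (eps*r*r*r/2)) in Hy.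
assert (H1 := Rmin_l (r/2) (eps*r*r*r/2)).
assert (H2 := Rmin_r (r/2) (eps*r*r*r/2)).
assert (Hy2 := Cmod_sub_ge w y).
replace (w - y)%C with (- (y - w))%C in Hy2 by ring. rewrite Cmod_opp in Hy2.
assert (Hyr : r / 2 < Cmod y) by (unfold r in *; lra).
assert (Hy0 : (y:C) <> RtoC 0).
{ intros E; subst y. rewrite Cmod_0 in Hyr. lra. }
replace (Cinv y - Cinv w - (y - w) * (- / (w*w)))%C with ((y - w) * (y - w) / (y * (w * w)))%C
  by (field; split; assumption).
unfold Cdiv. rewrite !Cmod_mult, Cmod_inv, !Cmod_mult.
2:{ apply Cmult_neq_0; [exact Hy0| apply Cmult_neq_0; exact Hw]. }
fold r. set (m := Cmod (y - w)) in *. set (q := Cmod y) in *.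
assert (0 <= m) by apply Cmod_ge_0.
assert (0 < q * (r * r)) by (apply Rmult_lt_0_compat; [lra| apply Rmult_lt_0_compat; lra]).
rewrite <- Rmult_assoc.
apply (Rmult_le_reg_r (q * (r*r))). exact H0.
replace (m * m * / (q * r * r) * (q * (r * r))) with (m * m)
  by (field; split; lra).
assert (m <= eps * r * r * r / 2) by lra.
assert (0 < eps) by apply cond_pos.
assert (m * m <= m * (eps * r * r * r / 2)) by nra.
assert (eps * m * ((r*r) * (r/2)) <= eps * m * (q * (r * r))).
{ apply Rmult_le_compat_l. apply Rmult_le_pos; lra. nra. }
assert (m * (eps * r * r * r / 2) = eps * m * ((r*r) * (r/2))) by field.
lra.
Qed.

Lemma scalCR (r:R) (a : C) : @scal _ C_R_NormedModule r a = Cmult (RtoC r) a.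
Proof. destruct a; unfold scal; simpl. unfold prod_scal, Cmult; simpl. unfold scal; simpl. unfold mult; simpl. f_equal; ring. Qed.
Lemma normCR (a : C) : @norm _ C_R_NormedModule a = Cmod a.
Proof. destruct a. unfold norm; simpl. unfold prod_norm, Cmod; simpl. unfold norm; simpl. unfold abs; simpl.
  assert (E : forall x, Rabs x * (Rabs x * 1) = x * (x * 1)).
  { intros x. rewrite !Rmult_1_r, <- Rabs_mult, Rabs_right. ring. apply Rle_ge; nra. }
  rewrite !E. reflexivity. Qed.
Lemma minusCR (a b : C) : @minus C_R_NormedModule a b = Cminus a b.
Proof. destruct a, b. reflexivity. Qed.

Lemma chain_R (f : C -> C) (b : C) (s : R) (l : C) :
  CD f (RtoC s * b)%C l ->
  @is_derive R_AbsRing C_R_NormedModule (fun t => f (RtoC t * b)%C) s (l * b)%C.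
Proof.
intros H. apply derive_eps. intros eps.
assert (Hb : 0 < Cmod b + 1) by (generalize (Cmod_ge_0 b); lra).
assert (He : 0 < eps / (Cmod b + 1)) by (apply Rdiv_lt_0_compat; [apply cond_pos|lra]).
destruct (derive_eps_inv _ _ _ H (mkposreal _ He)) as [d Hd].
assert (Hd' : 0 < d / (Cmod b + 1)) by (apply Rdiv_lt_0_compat; [apply cond_pos|lra]).
exists (mkposreal _ Hd'). intros y Hy. simpl in Hy, Hd.
change (Rabs (y - s) < d / (Cmod b + 1)) in Hy.
rewrite normCR. repeat rewrite minusCR. rewrite scalCR. repeat rewrite minusCR.
change (@minus R_AbsRing y s) with (y - s).
change (@norm R_AbsRing (AbsRing_NormedModule R_AbsRing) (y - s)) with (Rabs (y - s)).
change (Cmod (Cminus (Cminus (f (RtoC y * b)%C) (f (RtoC s * b)%C)) (RtoC (y - s) * (l * b))) <= eps * Rabs (y - s)).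
specialize (Hd (RtoC y * b)%C).
change (Cmod (RtoC y * b - RtoC s * b)%C < d -> Cmod (f (RtoC y * b) - f (RtoC s * b) - (RtoC y * b - RtoC s * b) * l)%C <= eps / (Cmod b + 1) * Cmod (RtoC y * b - RtoC s * b)%C) in Hd.
change (@norm _ (AbsRing_NormedModule R_AbsRing) (minus y s)) with (Rabs (y - s)).
replace (RtoC y * b - RtoC s * b)%C with (RtoC (y - s) * b)%C in Hd
  by (rewrite RtoC_minus; ring).
rewrite Cmod_mult, Cmod_R in Hd.
replace (RtoC (y - s) * (l * b))%C with (RtoC (y - s) * b * l)%C by ring.
assert (0 <= Rabs (y - s)) by apply Rabs_pos.
assert (0 <= Cmod b) by apply Cmod_ge_0.
assert (Hlt : Rabs (y - s) * Cmod b < d).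
{ apply Rle_lt_trans with (Rabs (y - s) * (Cmod b + 1)). nra.
  apply Rmult_lt_reg_r with (/ (Cmod b + 1)). apply Rinv_0_lt_compat; lra.
  rewrite Rmult_assoc, Rinv_r by lra. rewrite Rmult_1_r. exact Hy. }
specialize (Hd Hlt).
eapply Rle_trans; [exact Hd|].
assert (eps / (Cmod b + 1) * (Rabs (y - s) * Cmod b) = eps * Rabs (y - s) * (Cmod b / (Cmod b + 1))) by (field; lra).
rewrite H2.
assert (Cmod b / (Cmod b + 1) <= 1).
{ apply Rmult_le_reg_r with (Cmod b + 1). lra. unfold Rdiv. rewrite Rmult_assoc, Rinv_l by lra. lra. }
assert (0 <= eps * Rabs (y - s)) by (apply Rmult_le_pos; [apply Rlt_le, cond_pos| lra]).
nra.
Qed.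

Lemma conv f x l: CD f x l -> @is_derive C_AbsRing C_NormedModule f x l.
Proof. intros H; apply derive_eps; intros eps; destruct (derive_eps_inv _ _ _ H eps) as [d Hd]; exists d; intros y Hy; specialize (Hd y Hy); exact Hd. Qed.
Lemma conv2 f x l: @is_derive C_AbsRing C_NormedModule f x l -> CD f x l.
Proof. intros H; apply derive_eps; intros eps; destruct (derive_eps_inv _ _ _ H eps) as [d Hd]; exists d; intros y Hy; specialize (Hd y Hy); exact Hd. Qed.

Lemma CD_ext (f : C -> C) (x l l' : C) : CD f x l -> l = l' -> CD f x l'.
Proof. intros H E; subst; exact H. Qed.
Lemma CD_uniq (f : C -> C) (x l1 l2 : C) : CD f x l1 -> CD f x l2 -> l1 = l2.
Proof. intros H1 H2. apply conv, is_C_derive_unique in H1. apply conv, is_C_derive_unique in H2. congruence. Qed.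
Lemma CD_id (x : C) : CD (fun y : C => y) x (RtoC 1).
Proof. exact (is_derive_id (K := C_AbsRing) x). Qed.
Lemma CD_const (a x : C) : CD (fun _ : C => a) x (RtoC 0).
Proof. eapply CD_ext. exact (is_derive_const (K := C_AbsRing) (V := AbsRing_NormedModule C_AbsRing) a x). reflexivity. Qed.
Lemma CD_plus (f g : C -> C) x df dg : CD f x df -> CD g x dg -> CD (fun y => f y + g y)%C x (df + dg)%C.
Proof. intros. exact (is_derive_plus (K := C_AbsRing) (V := AbsRing_NormedModule C_AbsRing) f g x df dg H H0). Qed.
Lemma CD_minus (f g : C -> C) x df dg : CD f x df -> CD g x dg -> CD (fun y => f y - g y)%C x (df - dg)%C.
Proof. intros. exact (is_derive_minus (K := C_AbsRing) (V := AbsRing_NormedModule C_AbsRing) f g x df dg H H0). Qed.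
Lemma CD_mult (f g : C -> C) x df dg : CD f x df -> CD g x dg -> CD (fun y => f y * g y)%C x (df * g x + f x * dg)%C.
Proof. intros. exact (is_derive_mult (K := C_AbsRing) f g x df dg H H0 Cmult_comm). Qed.
Lemma CD_inv (f : C -> C) x df : CD f x df -> f x <> 0%C -> CD (fun y => / f y)%C x (- df / (f x * f x))%C.
Proof. intros H Hf.
 assert (H2 := is_derive_comp (K := C_AbsRing) (V := AbsRing_NormedModule C_AbsRing) Cinv f x _ df (is_derive_Cinv (f x) Hf) H).
 eapply CD_ext. exact H2. change (df * (- / (f x * f x)) = - df / (f x * f x))%C. field. exact Hf. Qed.


Ltac cd1 := lazymatch goal with
 | |- CD (fun y => Cmult (@?f y) (@?g y)) _ _ => apply (CD_mult f g)
 | |- CD (fun y => Cplus (@?f y) (Copp (@?g y))) _ _ => apply (CD_minus f g)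
 | |- CD (fun y => Cminus (@?f y) (@?g y)) _ _ => apply (CD_minus f g)
 | |- CD (fun y => Cplus (@?f y) (@?g y)) _ _ => apply (CD_plus f g)
 | |- CD (fun y => Cinv (@?f y)) _ _ => apply (CD_inv f)
 | |- CD (fun y => y) _ _ => apply CD_id
 | |- CD (fun y => _) _ _ => apply CD_const
 end.
Ltac cd := repeat (first [eassumption | cd1]; cbv beta).


Lemma disk_ne1 (w : C) : unit_disk w -> (1 - w)%C <> RtoC 0.
Proof. unfold unit_disk. intros Hw E. assert (w = RtoC 1).
 { replace w with (1 - (1 - w))%C by ring. rewrite E. ring. }
 subst w. rewrite Cmod_R, Rabs_R1 in Hw. lra. Qed.
Lemma disk_ne2 (w : C) : unit_disk w -> (1 + w)%C <> RtoC 0.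
Proof. unfold unit_disk. intros Hw E. assert (w = RtoC (-1)).
 { replace w with ((1 + w) - 1)%C by ring. rewrite E. apply injective_projections; simpl; ring. }
 subst w. rewrite Cmod_R, Rabs_left in Hw; lra. Qed.

Lemma dh_formula (h g dh dg : C -> C) (eps : R) :
  (forall z, unit_disk z -> has_cderiv h z (dh z) /\ has_cderiv g z (dg z)) ->
  (forall z, unit_disk z -> dh z <> 0%R) ->
  (forall z, unit_disk z -> (h z - g z)%C = (z / ((1 - z) * (1 - z)))%C) ->
  (eps = 1 \/ eps = -1) ->
  (forall z, unit_disk z -> (dg z / dh z)%C = ((RtoC eps * z) * (RtoC eps * z))%C) ->
  forall w, unit_disk w -> dh w = (/ ((1 - w) * (1 - w) * (1 - w) * (1 - w)))%C.
Proof.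
intros Hd Hnz Hhg Heps Hom w Hw.
assert (ee : (RtoC eps * RtoC eps = 1)%C).
{ rewrite <- RtoC_mult. f_equal. destruct Heps; subst; ring. }
assert (H1 := disk_ne1 w Hw). assert (H2 := disk_ne2 w Hw).
assert (Hh := conv2 _ _ _ (proj1 (Hd w Hw))).
assert (Hg := conv2 _ _ _ (proj2 (Hd w Hw))).
assert (HP : CD (fun y => (1 - y) * (1 - y) * (h y - g y))%C w
   (((0 - 1) * (1 - w) + (1 - w) * (0 - 1)) * (h w - g w) + (1 - w) * (1 - w) * (dh w - dg w))%C).
{ eapply CD_ext. cd. reflexivity. }
assert (HP2 : CD (fun y => y) w
   (((0 - 1) * (1 - w) + (1 - w) * (0 - 1)) * (h w - g w) + (1 - w) * (1 - w) * (dh w - dg w))%C).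
{ assert (Hr : 0 < 1 - Cmod w) by (unfold unit_disk in Hw; lra).
  assert (Hloc : forall y : C, Cmod (y - w) < 1 - Cmod w ->
     ((1 - y) * (1 - y) * (h y - g y))%C = y).
  { intros y Hy.
    assert (Hy' : unit_disk y).
    { unfold unit_disk. assert (T := Cmod_triangle (y - w) w).
      replace (y - w + w)%C with y in T by ring. lra. }
    rewrite (Hhg y Hy'). field. apply disk_ne1; exact Hy'. }
  eapply is_derive_ext_loc; [|exact HP].
  exists (mkposreal _ Hr). intros y Hy. apply Hloc. exact Hy. }
assert (E := CD_uniq _ _ _ _ HP2 (CD_id w)).
rewrite (Hhg w Hw) in E.
assert (Hdg : dg w = (dh w * (w * w))%C).
{ specialize (Hom w Hw). specialize (Hnz w Hw).
  replace (dg w) with (dg w / dh w * dh w)%C by (field; exact Hnz).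
  rewrite Hom. replace (RtoC eps * w * (RtoC eps * w))%C with (RtoC eps * RtoC eps * (w * w))%C by ring.
  rewrite ee. ring. }
rewrite Hdg in E.
remember (dh w) as d.
match type of E with ?A = _ =>
  assert (HX : (d * ((1 - w) * (1 - w) * (1 - w) * (1 + w)) = A + 2 * w / (1 - w))%C) by (field; exact H1) end.
rewrite E in HX.
transitivity ((d * ((1 - w) * (1 - w) * (1 - w) * (1 + w))) / ((1 - w) * (1 - w) * (1 - w) * (1 + w)))%C.
{ field. split; assumption. }
rewrite HX. field. split; assumption.
Qed.

Lemma disk_seg (z : C) (s : R) : unit_disk z -> 0 <= s <= 1 -> unit_disk (RtoC s * z)%C.
Proof. unfold unit_disk. intros Hz Hs. rewrite Cmod_mult, Cmod_R.
 rewrite Rabs_right by lra. assert (0 <= Cmod z) by apply Cmod_ge_0. nra. Qed.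

Lemma ne4 (w : C) : (1 - w)%C <> RtoC 0 -> ((1 - w) * (1 - w) * (1 - w) * (1 - w))%C <> RtoC 0.
Proof. intros H. repeat apply Cmult_neq_0; auto. Qed.
Lemma ne3 (w : C) : (1 - w)%C <> RtoC 0 -> ((1 - w) * (1 - w) * (1 - w))%C <> RtoC 0.
Proof. intros H. repeat apply Cmult_neq_0; auto. Qed.
Lemma ne2 (w : C) : (1 - w)%C <> RtoC 0 -> ((1 - w) * (1 - w))%C <> RtoC 0.
Proof. intros H. repeat apply Cmult_neq_0; auto. Qed.
Lemma ne_c3 : RtoC 3 <> RtoC 0. Proof. intros E; apply RtoC_inj in E; lra. Qed.
Lemma ne_c2 : RtoC 2 <> RtoC 0. Proof. intros E; apply RtoC_inj in E; lra. Qed.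

Ltac nz := repeat (lazymatch goal with |- _ /\ _ => split | _ => idtac end); repeat first [ apply Cmult_neq_0 | apply ne_c3 | apply ne_c2 | apply disk_ne1 | apply disk_seg | assumption ].

Lemma h_formula (h dh : C -> C) :
  (forall w, unit_disk w -> has_cderiv h w (dh w)) ->
  (forall w, unit_disk w -> dh w = (/ ((1 - w) * (1 - w) * (1 - w) * (1 - w)))%C) ->
  h (RtoC 0) = RtoC 0 ->
  forall z, unit_disk z -> h z = (/ (3 * ((1 - z) * (1 - z) * (1 - z))) - / 3)%C.
Proof.
intros Hd Hdh h0 z Hz.
set (df := fun s : R => (/ ((1 - RtoC s * z) * (1 - RtoC s * z) * (1 - RtoC s * z) * (1 - RtoC s * z)) * z)%C).
assert (Hcont : forall s, 0 <= s <= 1 -> @continuous R_UniformSpace C_R_NormedModule df s).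
{ intros s Hs. apply ex_derive_continuous. eexists.
  apply (chain_R (fun w => (/ ((1 - w) * (1 - w) * (1 - w) * (1 - w)) * z)%C)).
  assert (Hw := disk_seg z s Hz Hs).
  cd; solve [nz]. }
assert (I1 : @is_RInt C_R_CompleteNormedModule df 0 1 (minus (h (RtoC 1 * z)%C) (h (RtoC 0 * z)%C))).
{ apply (@is_RInt_derive C_R_CompleteNormedModule (fun t => h (RtoC t * z)%C)).
  - intros s Hs. rewrite Rmin_left, Rmax_right in Hs by lra.
    assert (Hw := disk_seg z s Hz Hs).
    assert (X := chain_R h z s _ (conv2 _ _ _ (Hd _ Hw))).
    rewrite (Hdh _ Hw) in X. exact X.
  - intros s Hs. rewrite Rmin_left, Rmax_right in Hs by lra. apply Hcont; exact Hs. }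
set (A1 := fun w : C => (/ (3 * ((1 - w) * (1 - w) * (1 - w))))%C).
assert (I2 : @is_RInt C_R_CompleteNormedModule df 0 1 (minus (A1 (RtoC 1 * z)%C) (A1 (RtoC 0 * z)%C))).
{ apply (@is_RInt_derive C_R_CompleteNormedModule (fun t => A1 (RtoC t * z)%C)).
  - intros s Hs. rewrite Rmin_left, Rmax_right in Hs by lra.
    assert (Hw := disk_seg z s Hz Hs).
    apply chain_R. unfold A1. eapply CD_ext. cd. all: try solve [nz].
    assert (Hw1 := disk_ne1 _ Hw). field. nz.
  - intros s Hs. rewrite Rmin_left, Rmax_right in Hs by lra. apply Hcont; exact Hs. }
apply is_RInt_unique in I1. apply is_RInt_unique in I2.
rewrite I1 in I2. change (Cminus (h (RtoC 1 * z)%C) (h (RtoC 0 * z)%C) = Cminus (A1 (RtoC 1 * z)%C) (A1 (RtoC 0 * z)%C)) in I2.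
replace (RtoC 1 * z)%C with z in I2 by ring.
replace (RtoC 0 * z)%C with (RtoC 0) in I2 by ring.
rewrite h0 in I2. unfold A1 in I2.
replace (h z) with (h z - 0)%C by ring. rewrite I2.
field. nz.
Qed.

Lemma F_formula (dh : C -> C) (eps : R) :
  (forall w, unit_disk w -> dh w = (/ ((1 - w) * (1 - w) * (1 - w) * (1 - w)))%C) ->
  forall z, unit_disk z ->
  seg_int0 (fun t => (2 * Ci * (RtoC eps * t) * dh t)%C) z =
  (2 * Ci * RtoC eps * ((/ (3 * ((1 - z) * (1 - z) * (1 - z))) - / (2 * ((1 - z) * (1 - z))))
     - (/ 3 - / 2)))%C.
Proof.
intros Hdh z Hz. unfold seg_int0.
set (K := fun w : C => (2 * Ci * (RtoC eps * w) * / ((1 - w) * (1 - w) * (1 - w) * (1 - w)))%C).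
set (kk := fun s : R => (K (RtoC s * z)%C * z)%C).
set (B := fun w : C => (2 * Ci * RtoC eps * (/ (3 * ((1 - w) * (1 - w) * (1 - w))) - / (2 * ((1 - w) * (1 - w)))))%C).
assert (Hcont : forall s, 0 <= s <= 1 -> @continuous R_UniformSpace C_R_NormedModule kk s).
{ intros s Hs. apply ex_derive_continuous. eexists.
  apply (chain_R (fun w => K w * z)%C).
  assert (Hw := disk_seg z s Hz Hs). unfold K.
  cd; solve [nz]. }
assert (I1 : @is_RInt C_R_CompleteNormedModule kk 0 1 (minus (B (RtoC 1 * z)%C) (B (RtoC 0 * z)%C))).
{ apply (@is_RInt_derive C_R_CompleteNormedModule (fun t => B (RtoC t * z)%C)).
  - intros s Hs. rewrite Rmin_left, Rmax_right in Hs by lra.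
    assert (Hw := disk_seg z s Hz Hs).
    apply chain_R. unfold B, K. eapply CD_ext. cd. all: try solve [nz].
    assert (Hw1 := disk_ne1 _ Hw). field. nz.
  - intros s Hs. rewrite Rmin_left, Rmax_right in Hs by lra. apply Hcont; exact Hs. }
assert (I2 : @is_RInt C_R_CompleteNormedModule (fun s : R => ((2 * Ci * (RtoC eps * (RtoC s * z)) * dh (RtoC s * z)) * z)%C) 0 1 (minus (B (RtoC 1 * z)%C) (B (RtoC 0 * z)%C))).
{ eapply is_RInt_ext; [|exact I1].
  intros s Hs. rewrite Rmin_left, Rmax_right in Hs by lra.
  assert (Hw := disk_seg z s Hz (conj (Rlt_le _ _ (proj1 Hs)) (Rlt_le _ _ (proj2 Hs)))).
  unfold kk, K. rewrite (Hdh _ Hw). reflexivity. }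
apply is_RInt_unique in I2. rewrite I2.
change (Cminus (B (RtoC 1 * z)%C) (B (RtoC 0 * z)%C) = (2 * Ci * RtoC eps * ((/ (3 * ((1 - z) * (1 - z) * (1 - z))) - / (2 * ((1 - z) * (1 - z))))
     - (/ 3 - / 2)))%C).
replace (RtoC 1 * z)%C with z by ring.
replace (RtoC 0 * z)%C with (RtoC 0) by ring.
unfold B. assert (Hz1 := disk_ne1 _ Hz).
field. nz.
Qed.

Lemma disk_ne3 (w : C) : unit_disk w -> (w - 1)%C <> RtoC 0.
Proof. intros Hw E. apply (disk_ne1 w Hw). replace (1 - w)%C with (- (w - 1))%C by ring.
 rewrite E. ring. Qed.

Theorem theorem4p1 (L : C -> Prop) (h g dh dg : C -> C) (eps c : R) :
  single_slit_domain L ->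
  in_SH0 h g dh dg ->
  (* f maps D onto L *)
  (forall w, L w <-> exists z, unit_disk z /\ w = (h z + Cconj (g z))%C) ->
  (forall z, unit_disk z -> (h z - g z)%C = (z / ((1 - z) * (1 - z)))%C) ->
  (eps = 1 \/ eps = -1) ->
  (* dilatation omega = g'/h' = b^2 with b(z) = eps z *)
  (forall z, unit_disk z -> (dg z / dh z)%C = ((RtoC eps * z) * (RtoC eps * z))%C) ->
  forall z, unit_disk z ->
    let f := (h z + Cconj (g z))%C in
    let F := Re (seg_int0 (fun t => (2 * Ci * (RtoC eps * t) * dh t)%C) z) + c in
    Re f = Re ((2 * z ^ 3 - 3 * z ^ 2 + 3 * z) / (3 * (1 - z) ^ 3))%C /\
    Im f = Im (z / ((1 - z) ^ 2))%C /\
    F = eps * Im (1 / ((z - 1) ^ 2) + 2 / (3 * (z - 1) ^ 3))%C + c.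
Proof.
intros HL HSH Honto Hhg Heps Hom z Hz.
destruct HSH as [Hd [h0 [g0 [dh0 [dg0 [Hnz Hinj]]]]]].
assert (Hdh := dh_formula h g dh dg eps Hd (fun w Hw => proj1 (Hnz w Hw)) Hhg Heps Hom).
assert (Hh := h_formula h dh (fun w Hw => proj1 (Hd w Hw)) Hdh h0 z Hz).
assert (HF := F_formula dh eps Hdh z Hz).
assert (Hz1 := disk_ne1 z Hz). assert (Hz3 := disk_ne3 z Hz).
assert (Hg : g z = (h z - z / ((1 - z) * (1 - z)))%C).
{ rewrite <- (Hhg z Hz). ring. }
cbv zeta. split; [|split].
- transitivity (Re (h z + g z)%C).
  { unfold Re, Cconj, Cplus; simpl. ring. }
  f_equal. rewrite Hg, Hh.
  replace (z ^ 3)%C with (z * z * z)%C by (simpl; ring).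
  replace (z ^ 2)%C with (z * z)%C by (simpl; ring).
  replace ((1 - z) ^ 3)%C with ((1 - z) * (1 - z) * (1 - z))%C by (simpl; ring).
  field. nz.
- transitivity (Im (h z - g z)%C).
  { unfold Im, Cconj, Cminus, Cplus, Copp; simpl. ring. }
  f_equal. rewrite (Hhg z Hz).
  replace ((1 - z) ^ 2)%C with ((1 - z) * (1 - z))%C by (simpl; ring). reflexivity.
- rewrite HF. f_equal.
  set (W0 := (1 / ((z - 1) ^ 2) + 2 / (3 * (z - 1) ^ 3))%C).
  assert (Eq : (2 * Ci * RtoC eps * ((/ (3 * ((1 - z) * (1 - z) * (1 - z))) - / (2 * ((1 - z) * (1 - z))))
     - (/ 3 - / 2)) = - (Ci * RtoC eps * (W0 - / 3)))%C).
  { unfold W0.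
    replace ((z - 1) ^ 3)%C with ((z - 1) * (z - 1) * (z - 1))%C by (simpl; ring).
    replace ((z - 1) ^ 2)%C with ((z - 1) * (z - 1))%C by (simpl; ring).
    field. nz. }
  rewrite Eq. clearbody W0. destruct W0 as [a b].
  unfold Re, Im, Ci, Cmult, Copp, Cminus, Cplus, Cinv, RtoC; simpl. field.
Qed.
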